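(* Let $\{\mathcal H,\gamma,\ell,\ell^{(2)}\}$ be null metric hypersurface data $(\Phi,\xi)$-embedded in a semi-Riemannian manifold $(\mathcal M,g)$ and let $Z\in\mathfrak X(\mathcal M)$. Then on $\Phi(\mathcal H)$, $$Z^\alpha=\xi^\alpha n^aZ_a+P^{ab}e_a^\alpha Z_b+\nu^\alpha\,\boldsymbol Z(\xi),$$ where $\boldsymbol Z=g(Z,\cdot)$ and $Z_a$ denotes the components of $\Phi^\star\boldsymbol Z$.
   Context: Metric hypersurface data: $\mathcal H$ smooth $\mathfrak n$-manifold with symmetric $(0,2)$-tensor $\gamma$, one-form $\ell$, function $\ell^{(2)}$ such that $\mathcal A((W,a),(V,b))=\gamma(W,V)+a\ell(V)+b\ell(W)+ab\ell^{(2)}$ is non-degenerate on each $T_p\mathcal H\times\mathbb R$. $P$ (symmetric $(2,0)$), $n$, $n^{(2)}$ defined by $\gamma_{ab}n^b+n^{(2)}\ell_a=0$, $\ell_an^a+n^{(2)}\ell^{(2)}=1$, $P^{ab}\ell_b+\ell^{(2)}n^a=0$, $P^{ac}\gamma_{cb}+\ell_bn^a=\delta^a_b$; null means $n^{(2)}=0$. $(\Phi,\xi)$-embedded: $\Phi:\mathcal H\to\mathcal M$ embedding, $\xi$ vector field along $\Phi(\mathcal H)$ transverse to it, $\Phi^\star g=\gamma$, $\Phi^\star(g(\xi,\cdot))=\ell$, $\Phi^\star(g(\xi,\xi))=\ell^{(2)}$. $e_a^\alpha$ are the components of $\Phi_\star e_a$ for a basis $e_a$ of $T\mathcal H$, and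 $\nu=n^{(2)}\xi+\Phi_\star n$ ($=\Phi_\star n$ here). *)

(* Defs.v *)
(* Pointwise (linear-algebra) model of null metric hypersurface
   data (Phi,xi)-embedded in a semi-Riemannian manifold, at a point p of H:
   ambient tangent space T_{Phi(p)}M = R^(m+1) (row vectors of components),
   g = matrix of the metric g_{alpha beta} (symmetric, nondegenerate),
   E = m x (m+1) matrix whose a-th row is e_a^alpha = components of Phi_* e_a,
   xi = components xi^alpha of the rigging. *)
From HB Require Import structures.
From mathcomp Require Import all_boot all_order all_algebra.
Set Implicit Arguments. Unset Strict Implicit. Unset Printing Implicit Defensive.
Import Order.TTheory GRing.Theory Num.Theory.
Local Open Scope ring_scope.

Section HD.
Variables (R : realFieldType) (m : nat).
Variables (g : 'M[R]_(m.+1)) (E : 'M[R]_(m, m.+1)) (xi : 'rV[R]_(m.+1)).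

Definition hd_gamma : 'M[R]_m := E *m g *m E^T.
Definition hd_ell : 'rV[R]_m := xi *m g *m E^T.
Definition hd_ell2 : R := (xi *m g *m xi^T) 0 0.

Definition hd_A : 'M[R]_(m + 1) :=
  block_mx hd_gamma hd_ell^T hd_ell hd_ell2%:M.
End HD.

(* (Phi,xi)-embedded metric hypersurface data at a point: g is a
   semi-Riemannian metric (symmetric, nondegenerate, any signature),
   Phi is an immersion (the e_a are independent), xi is transverse
   (e_a together with xi form a basis), and A is nondegenerate. *)
Definition embedded_hd (R : realFieldType) (m : nat)
  (g : 'M[R]_(m.+1)) (E : 'M[R]_(m, m.+1)) (xi : 'rV[R]_(m.+1)) : Prop :=
  [/\ g^T = g, g \in unitmx, row_free E, row_free (col_mx E xi)
    & hd_A g E xi \in unitmx].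

Definition hd_dual (R : realFieldType) (m : nat)
  (g : 'M[R]_(m.+1)) (E : 'M[R]_(m, m.+1)) (xi : 'rV[R]_(m.+1))
  (P : 'M[R]_m) (nv : 'rV[R]_m) (n2 : R) : Prop :=
  [/\ P^T = P,
      hd_gamma g E *m nv^T + n2 *: (hd_ell g E xi)^T = 0,
      (hd_ell g E xi *m nv^T) 0 0 + n2 * hd_ell2 g xi = 1,
      P *m (hd_ell g E xi)^T + hd_ell2 g xi *: nv^T = 0
    & P *m hd_gamma g E + nv^T *m hd_ell g E xi = 1%:M].

(* Main.v *)
Require Import Defs.
From HB Require Import structures.
From mathcomp Require Import all_boot all_order all_algebra.
Import Order.TTheory GRing.Theory Num.Theory.
Local Open Scope ring_scope.

Theorem lemmaB1 (R : realFieldType) (m : nat)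
  (g : 'M[R]_(m.+1)) (E : 'M[R]_(m, m.+1)) (xi : 'rV[R]_(m.+1))
  (P : 'M[R]_m) (nv : 'rV[R]_m) (n2 : R) (Z : 'rV[R]_(m.+1)) :
  embedded_hd g E xi ->
  hd_dual g E xi P nv n2 ->
  n2 = 0 ->
  let Zflat := Z *m g in
  let Za := Zflat *m E^T in
  let Zxi := (Zflat *m xi^T) 0 0 in
  let nu := n2 *: xi + nv *m E in
  Z = (Za *m nv^T) 0 0 *: xi + (Za *m P) *m E + Zxi *: nu.
Proof.
move=> [gT gU _ Mfree _] [PT H1 H2 H3 H4] n20 Zflat Za Zxi nu.
rewrite /hd_gamma /hd_ell /hd_ell2 in H1 H2 H3 H4.
rewrite n20 scale0r addr0 in H1; rewrite n20 mul0r addr0 in H2.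
set Q := E^T *m nv^T *m xi + E^T *m P *m E + xi^T *m nv *m E.
have gam : (E *m g *m E^T)^T = E *m g *m E^T by rewrite !trmx_mul trmxK gT mulmxA.
have nvg : nv *m (E *m g *m E^T) = 0.
  by rewrite -gam -[nv]trmxK -trmx_mul H1 trmx0.
have QE : Q *m g *m E^T = E^T.
  rewrite /Q !mulmxDl.
  rewrite -!(mulmxA (E^T *m nv^T)) -!(mulmxA (E^T *m P)) -!(mulmxA (xi^T *m nv)).
  rewrite -(mulmxA xi^T) nvg mulmx0 addr0.
  by rewrite -!(mulmxA E^T) -mulmxDr addrC H4 mulmx1.
have Qx : Q *m g *m xi^T = xi^T.
  rewrite /Q !mulmxDl.
  rewrite -!(mulmxA (E^T *m nv^T)) -!(mulmxA (E^T *m P)) -!(mulmxA (xi^T *m nv)).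
  have e2 : xi *m g *m xi^T = (hd_ell2 g xi)%:M by rewrite /hd_ell2 -mx11_scalar.
  have e1 : E *m g *m xi^T = (xi *m g *m E^T)^T by rewrite !trmx_mul trmxK gT mulmxA.
  rewrite e2 e1 -!(mulmxA E^T) mul_mx_scalar /hd_ell2.
  rewrite -mulmxDr (addrC (_ *: _)) H3 mulmx0 add0r.
  rewrite -(mulmxA xi^T).
  have -> : nv *m (xi *m g *m E^T)^T = 1%:M.
    rewrite -(trmxK (nv *m (xi *m g *m E^T)^T)) trmx_mul trmxK.
    by rewrite (mx11_scalar (xi *m g *m E^T *m nv^T)) H2 tr_scalar_mx.
  by rewrite mulmx1.
have Mfull : row_full (col_mx E xi) by rewrite /row_full; move: Mfree; rewrite /row_free => /eqP ->; rewrite addn1.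
have Qg : Q *m g = 1%:M.
  apply/eqP; rewrite -subr_eq0; apply/eqP.
  apply: trmx_inj; apply: (row_full_inj Mfull); apply: trmx_inj.
  rewrite trmx0 mulmx0 trmx0 trmx_mul trmxK tr_col_mx mul_mx_row.
  by rewrite !mulmxBl QE Qx !mul1mx !subrr row_mx0.
have gQ := mulmx1C Qg.
have -> : (Za *m nv^T) 0 0 *: xi + (Za *m P) *m E + Zxi *: nu = Z *m g *m Q.
  rewrite /nu n20 scale0r add0r /Q /Zxi /Za /Zflat !mulmxDr.
  rewrite -!mul_scalar_mx -!mx11_scalar.
  by rewrite !mulmxA.
by rewrite -mulmxA gQ mulmx1.
Qed.
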